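(* Let $n\ge -1$ be an odd integer, and let $q_1,q_2\in\Gamma_n$ and paths $a,b$ of positive length satisfy $q_1a=bq_2$ (so $q_1$ and $q_2$ occur at different positions in the path $w:=q_1a=bq_2$, $q_1$ as a suffix and $q_2$ as a prefix). If $a\notin I$ and $b\notin I$, then there exist $(n+1)$-ambiguities $p_1,p_2\le w$ (occurring in $w$) such that $\sigma_n(p_1)=q_1$ and $\pi_n(p_2)=q_2$ (as occurrences in $w$).
   Context: Let $\Bbbk$ be a field, $Q=(Q_0,Q_1,s,t)$ a finite quiver, and $A=\Bbbk Q/I$ a finite-dimensional monomial algebra, i.e. $I$ is an ideal generated by paths of length at least $2$. Paths are written from right to left: a path is $p=\alpha_n\cdots\alpha_1$ with arrows $\alpha_i$ and $t(\alpha_i)=s(\alpha_{i+1})$; vertices are the paths of length $0$ (trivial paths, also denoted $1$); $qp$ denotes concatenation when $t(p)=s(q)$. Let $\mathcal B$ be the set of paths not lying in $I$. If $p=bqa$ for paths $a,b,q$, then $q$ is a divisor of $p$; we write $q\le p$ to mean that $q$ is a divisor of $p$ at a fixed position (an occurrence), and then $\mathrm{pre}_p(q):=a$, $\mathrm{suf}_p(q):=b$. If $b$ is trivial, $q$ is a suffix; if $a$ is trivial, $q$ is a prefix; proper means $q\neq p$, written $q\lneq p$. For $n\ge -1$, a left $n$-ambiguity is a path $p$ with a decomposition $p=u_{-1}u_0u_1\cdots u_n$ such that $u_{-1}\in Q_0$, $u_0\in Q_1$, $u_i\in\mathcal B$ for all $i$, and for every $0\le i\le n-1$, $u_iu_{i+1}\in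 I$ while no proper suffix of $u_iu_{i+1}$ lies in $I$ (one writes $p=u_0\cdots u_n$). A right $n$-ambiguity is a path with a decomposition $p=v_n\cdots v_0v_{-1}$ with $v_{-1}\in Q_0$, $v_0\in Q_1$, $v_i\in\mathcal B$, and for $0\le i\le n-1$, $v_{i+1}v_i\in I$ while no proper prefix of $v_{i+1}v_i$ lies in $I$. A path is a left $n$-ambiguity iff it is a right $n$-ambiguity; such paths are called $n$-ambiguities, and $\Gamma_n$ denotes their set. Both decompositions of an $n$-ambiguity are unique. For $p\in\Gamma_n$ with left decomposition $u_0\cdots u_n$ and right decomposition $v_n\cdots v_0$, and $-1\le m\le n$, set $\sigma_m(p):=u_0\cdots u_m$ (a suffix of $p$ which is an $m$-ambiguity) and $\pi_m(p):=v_m\cdots v_0$ (a prefix of $p$ which is an $m$-ambiguity). *)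

(* Defs.v *)
(* Quivers, paths and monomial relations, written as in the paper:
   paths are composed right to left; a path's arrow word [parrs] lists the arrows
   in the written order, i.e. the LEFTMOST (last traversed) arrow first.
   So for the paper's concatenation  q p  (t p = s q) we get  parrs q ++ parrs p. *)
From mathcomp Require Import all_boot all_order all_algebra.
Set Implicit Arguments. Unset Strict Implicit. Unset Printing Implicit Defensive.
Import Order.TTheory GRing.Theory Num.Theory.

Section Quiver.
Variables (V E : finType) (s t : E -> V).

Record qpath := QPath { psrc : V; ptgt : V; parrs : seq E }.

Fixpoint chain (ws : seq E) : Prop :=
  match ws with
  | x :: ((y :: _) as ws') => s x = t y /\ chain ws'
  | _ => True
  end.

Definition valid (p : qpath) : Prop :=
  match parrs p with
  | [::] => psrc p = ptgt p
  | x :: ws => ptgt p = t x /\ psrc p = s (last x ws) /\ chain (x :: ws)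
  end.

Definition pcat (q p : qpath) : qpath := QPath (psrc p) (ptgt q) (parrs q ++ parrs p).

Definition composable (q p : qpath) : Prop := valid q /\ valid p /\ psrc q = ptgt p.

Variable rels : seq E -> Prop.

(* a word lies in the monomial ideal I iff some generator divides it *)
Definition inIw (ws : seq E) : Prop :=
  exists l r m, rels r /\ ws = l ++ r ++ m.
Definition inI (p : qpath) : Prop := inIw (parrs p).

(* left decomposition  p = u_{-1} u_0 ... u_{m-1}  (m = n+1);  us = [u_0; ...; u_{m-1}],
   u_{-1} = the vertex ptgt p.  A proper suffix of u_i u_{i+1} is a left part x of
   u_i u_{i+1} = x y with y nontrivial. *)
Definition ldec (m : nat) (p : qpath) (us : seq (seq E)) : Prop :=
  [/\ valid p /\ size us = m, parrs p = flatten us,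
      ((0 < m)%N -> size (nth [::] us 0) = 1),
      (forall i, (i < m)%N -> ~ inIw (nth [::] us i)) &
      forall i, (i.+1 < m)%N ->
        inIw (nth [::] us i ++ nth [::] us i.+1) /\
        forall x y, nth [::] us i ++ nth [::] us i.+1 = x ++ y -> y <> [::] -> ~ inIw x].

(* right decomposition  p = v_{m-1} ... v_0 v_{-1};  vs = [v_0; ...; v_{m-1}],
   v_{-1} = the vertex psrc p.  A proper prefix of v_{i+1} v_i is a right part y of
   v_{i+1} v_i = x y with x nontrivial. *)
Definition rdec (m : nat) (p : qpath) (vs : seq (seq E)) : Prop :=
  [/\ valid p /\ size vs = m, parrs p = flatten (rev vs),
      ((0 < m)%N -> size (nth [::] vs 0) = 1),
      (forall i, (i < m)%N -> ~ inIw (nth [::] vs i)) &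
      forall i, (i.+1 < m)%N ->
        inIw (nth [::] vs i.+1 ++ nth [::] vs i) /\
        forall x y, nth [::] vs i.+1 ++ nth [::] vs i = x ++ y -> x <> [::] -> ~ inIw y].

(* Gamma_n for an integer n >= -1 : the n-ambiguities (defined as left n-ambiguities;
   the paper proves left <-> right). *)
Definition Gamma (n : int) (p : qpath) : Prop :=
  (-1 <= n)%R /\ exists us, ldec `|(n + 1)%R|%N p us.

(* sigma_k(p) = q for p in Gamma_n, -1 <= k <= n : q = u_{-1} u_0 ... u_k
   read off the (unique) left decomposition of p. *)
Definition sigma_is (n k : int) (p q : qpath) : Prop :=
  (-1 <= k)%R /\ (k <= n)%R /\
  exists us, [/\ ldec `|(n + 1)%R|%N p us, valid q, ptgt q = ptgt p &
                 parrs q = flatten (take `|(k + 1)%R|%N us)].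

(* pi_k(p) = q for p in Gamma_n : q = v_k ... v_0 v_{-1}, from the right decomposition. *)
Definition pi_is (n k : int) (p q : qpath) : Prop :=
  (-1 <= k)%R /\ (k <= n)%R /\
  exists vs, [/\ rdec `|(n + 1)%R|%N p vs, valid q, psrc q = psrc p &
                 parrs q = flatten (rev (take `|(k + 1)%R|%N vs))].

End Quiver.

(* Main.v *)
Require Import Defs.
From mathcomp Require Import all_boot all_order all_algebra.
From mathcomp Require Import zify.
From Stdlib Require Import ClassicalEpsilon.
Import Order.TTheory GRing.Theory Num.Theory.
Set Implicit Arguments. Unset Strict Implicit. Unset Printing Implicit Defensive.

Section Words.
Variable E : finType.

Lemma inI_ext (rels : seq E -> Prop) l w r : inIw rels w -> inIw rels (l ++ w ++ r).
Proof.
case=> l' [r' [m' [Hr ->]]]; exists (l ++ l'), r', (m' ++ r); split=> //.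
by rewrite -!catA.
Qed.

Definition sub (w : seq E) x y := take (y - x) (drop x w).

Lemma size_sub w x y : y <= size w -> size (sub w x y) = y - x.
Proof. by move=> H; rewrite /sub size_take size_drop; case: ltnP => //; lia. Qed.

Lemma subcat w x y z : x <= y <= z -> sub w x z = sub w x y ++ sub w y z.
Proof.
move=> /andP [H1 H2]; rewrite /sub.
have -> : z - x = (y - x) + (z - y) by lia.
by rewrite takeD drop_drop subnK.
Qed.

Lemma sub_mono (rels : seq E -> Prop) w x' x y y' :
  x' <= x -> x <= y -> y <= y' -> inIw rels (sub w x y) -> inIw rels (sub w x' y').
Proof.
move=> h1 h2 h3 H.
rewrite (@subcat w x' x y'); last by apply/andP; split; lia.
rewrite (@subcat w x y y'); last by apply/andP; split; lia.
exact: inI_ext.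
Qed.

Lemma sub_full w : sub w 0 (size w) = w.
Proof. by rewrite /sub drop0 subn0 take_size. Qed.

Lemma sub_splitl w a c x y : sub w a c = x ++ y -> x = sub w a (a + size x).
Proof.
move=> H.
have Hs : size x <= c - a.
  move: (f_equal size H); rewrite size_cat /sub size_take_min => h.
  have := geq_minl (c - a) (size (drop a w)); lia.
have H2 := f_equal (take (size x)) H.
rewrite take_size_cat // /sub take_takel // in H2.
by rewrite /sub addKn H2.
Qed.

Lemma sub_splitr w a c x y : a <= c -> sub w a c = x ++ y -> y = sub w (a + size x) c.
Proof.
move=> hac H.
have Hs : size x <= c - a.
  move: (f_equal size H); rewrite size_cat /sub size_take_min => h.
  have := geq_minl (c - a) (size (drop a w)); lia.
have := H; rewrite (@subcat w a (a + size x) c); last by apply/andP; split; lia.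
rewrite -(sub_splitl H) => H2.
by have := f_equal (drop (size x)) H2; rewrite !drop_size_cat.
Qed.


Definition ldecw (rels : seq E -> Prop) m (ws : seq E) us := [/\ size us = m, ws = flatten us,
  (0 < m -> size (nth [::] us 0) = 1),
  (forall i, i < m -> ~ inIw rels (nth [::] us i)) &
  forall i, i.+1 < m -> inIw rels (nth [::] us i ++ nth [::] us i.+1) /\
    forall x y, nth [::] us i ++ nth [::] us i.+1 = x ++ y -> y <> [::] -> ~ inIw rels x].

Definition rdecw (rels : seq E -> Prop) m (ws : seq E) vs := [/\ size vs = m, ws = flatten (rev vs),
  (0 < m -> size (nth [::] vs 0) = 1),
  (forall i, i < m -> ~ inIw rels (nth [::] vs i)) &
  forall i, i.+1 < m -> inIw rels (nth [::] vs i.+1 ++ nth [::] vs i) /\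
    forall x y, nth [::] vs i.+1 ++ nth [::] vs i = x ++ y -> x <> [::] -> ~ inIw rels y].

Definition bnd (us : seq (seq E)) j := size (flatten (take j us)).

Lemma bndS us i : bnd us i.+1 = bnd us i + size (nth [::] us i).
Proof.
rewrite /bnd; case: (ltnP i (size us)) => H.
  by rewrite (take_nth [::] H) flatten_rcons size_cat.
rewrite (take_oversize H) take_oversize; last by apply: leqW.
by rewrite nth_default // addn0.
Qed.

Lemma bnd0 us : bnd us 0 = 0.
Proof. by rewrite /bnd take0. Qed.

Lemma bnd_size us : bnd us (size us) = size (flatten us).
Proof. by rewrite /bnd take_size. Qed.

Lemma bnd_mono us i j : i <= j -> bnd us i <= bnd us j.
Proof.
move=> /subnK <-; elim: (j - i) => [|d IH]; first by rewrite add0n.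
by rewrite addSn bndS; apply: (leq_trans IH); apply: leq_addr.
Qed.

Lemma bnd_le us j : bnd us j <= size (flatten us).
Proof.
case: (leqP j (size us)) => h; first by rewrite -bnd_size; apply: bnd_mono.
by rewrite /bnd take_oversize // ltnW.
Qed.

Section Pos.
Variables (rels : seq E -> Prop) (m : nat) (ws : seq E) (us : seq (seq E)) (pre post : seq E).
Hypothesis H : ldecw rels m ws us.

Definition Ep j := size pre + bnd us j.
Local Notation w := (pre ++ ws ++ post).

Lemma Ep0 : Ep 0 = size pre.
Proof. by rewrite /Ep bnd0 addn0. Qed.

Lemma Epm : Ep m = size pre + size ws.
Proof. by case: H => <- -> _ _ _; rewrite /Ep bnd_size. Qed.

Lemma EpS i : Ep i.+1 = Ep i + size (nth [::] us i).
Proof. by rewrite /Ep bndS addnA. Qed.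

Lemma Ep_mono i j : i <= j -> Ep i <= Ep j.
Proof. by move=> h; rewrite /Ep leq_add2l bnd_mono. Qed.

Lemma Ep_le i : Ep i <= size pre + size ws.
Proof. by case: H => _ -> _ _ _; rewrite /Ep leq_add2l bnd_le. Qed.

Lemma Ep_nth i : i < m -> nth [::] us i = sub w (Ep i) (Ep i.+1).
Proof.
case: H => Hs Hw _ _ _ Hi; rewrite -Hs in Hi.
rewrite /sub EpS addKn /Ep addnC -drop_drop drop_size_cat // Hw.
rewrite /bnd; rewrite -[in drop _ (flatten us ++ _)](cat_take_drop i us) flatten_cat -catA drop_size_cat ?cat_take_drop //.
by rewrite (drop_nth [::] Hi) /= -catA take_size_cat.
Qed.

Lemma Ep1 : 0 < m -> Ep 1 = (size pre).+1.
Proof. by case: H => _ _ H1 _ _ hm; rewrite EpS Ep0 H1 // addn1. Qed.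

Lemma Ep_lt i : i < m -> Ep i < Ep i.+1.
Proof.
case: H => _ _ H1 Hn Hp hi; rewrite EpS.
case: i hi => [|i] hi; first by rewrite H1 // addn1.
have [Hp1 _] := Hp i hi.
case E0: (nth [::] us i.+1) => [|x r]; last by rewrite /= addnS ltnS leq_addr.
by exfalso; apply: (Hn i (ltnW hi)); rewrite E0 cats0 in Hp1.
Qed.

Lemma Pc i : i < m -> ~ inIw rels (sub w (Ep i) (Ep i.+1)).
Proof. by move=> hi; rewrite -Ep_nth //; case: H => _ _ _ Hn _; apply: Hn. Qed.

Lemma Pa i : i.+1 < m -> inIw rels (sub w (Ep i) (Ep i.+2)).
Proof.
move=> hi; rewrite (@subcat w _ (Ep i.+1)); last by rewrite !Ep_mono.
rewrite -!Ep_nth //; last by apply: ltnW.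
by case: H => _ _ _ _ Hp; case: (Hp i hi).
Qed.

Lemma Pb i y : i.+1 < m -> Ep i <= y -> y < Ep i.+2 -> ~ inIw rels (sub w (Ep i) y).
Proof.
move=> hi h1 h2.
have Hle : Ep i.+2 <= size w.
  by rewrite !size_cat; apply: leq_trans (Ep_le _) _; rewrite addnA leq_addr.
case: H => _ _ _ _ Hp; case: (Hp i hi) => _ Hmin.
apply: (Hmin _ (sub w y (Ep i.+2))).
  rewrite Ep_nth ?(ltnW hi) // Ep_nth // -!subcat //; first by rewrite h1 ltnW.
  by rewrite !Ep_mono.
move=> E0; have := f_equal size E0; rewrite size_sub //=; lia.
Qed.

End Pos.

Definition pb (P : Prop) : bool := if excluded_middle_informative P then true else false.
Lemma pbP P : reflect P (pb P).
Proof. by rewrite /pb; case: excluded_middle_informative => h; constructor. Qed.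

Fixpoint dsearch (f : nat -> bool) k :=
  match k with 0 => 0 | k'.+1 => if f k then k else dsearch f k' end.

Lemma dsearchP (f : nat -> bool) k y : y <= k -> f y ->
  [/\ f (dsearch f k), y <= dsearch f k, dsearch f k <= k &
      forall y', dsearch f k < y' <= k -> ~~ f y'].
Proof.
elim: k => [|k IH] hy fy.
  move: hy; rewrite leqn0 => /eqP Hy; subst y; split => // y' /andP [h1 h2].
  by move: h1 h2; rewrite /=; lia.
rewrite /=; case fk: (f k.+1).
  by split => // y' /andP [h1 h2]; move: h1 h2; lia.
have hy' : y <= k.
  rewrite leq_eqVlt in hy; case/orP: hy => [/eqP Hy|//].
  by subst; rewrite fk in fy.
have [h1 h2 h3 h4] := IH hy' fy; split => //; first by apply: leqW.
move=> y' /andP [a b]; case: (ltnP k y') => c.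
  have e : y' = k.+1 by lia.
  by rewrite e fk.
by apply: h4; rewrite a c.
Qed.

Section L2R.
Variables (rels : seq E -> Prop) (m : nat) (ws : seq E) (us : seq (seq E)).
Hypothesis H : ldecw rels m ws us.
Hypothesis Hm : 0 < m.

Local Notation N := (size ws).
Local Notation Ex := (Ep us [::]).
Definition PP x y := inIw rels (sub ws x y).
Definition maxpos z := dsearch (fun y => pb (PP y z)) z.
Fixpoint FF k := match k with 0 => N | 1 => N.-1 | k'.+2 => maxpos (FF k') end.

Lemma LPc i : i < m -> ~ PP (Ex i) (Ex i.+1).
Proof. by move=> hi; have := @Pc rels m ws us [::] [::] H i hi; rewrite /= cats0. Qed.
Lemma LPa i : i.+1 < m -> PP (Ex i) (Ex i.+2).
Proof. by move=> hi; have := @Pa rels m ws us [::] [::] H i hi; rewrite /= cats0. Qed.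
Lemma LPb i y : i.+1 < m -> Ex i <= y -> y < Ex i.+2 -> ~ PP (Ex i) y.
Proof. by move=> h1 h2 h3; have := @Pb rels m ws us [::] [::] H i y h1 h2 h3; rewrite /= cats0. Qed.
Lemma LEm : Ex m = N.
Proof. by rewrite (Epm [::] H). Qed.
Lemma LE0 : Ex 0 = 0.
Proof. by rewrite Ep0. Qed.
Lemma LE1 : Ex 1 = 1.
Proof. by rewrite (Ep1 [::] H). Qed.
Lemma LElt i : i < m -> Ex i < Ex i.+1.
Proof. exact: (Ep_lt [::] H). Qed.
Lemma LEmono i j : i <= j -> Ex i <= Ex j.
Proof. exact: Ep_mono. Qed.

Definition Inv k := Ex (m - k) <= FF k /\ (0 < k -> FF k < Ex (m - k).+1).

Lemma Fstep k : k.+2 <= m -> Inv k ->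
  [/\ Inv k.+2, PP (FF k.+2) (FF k), FF k.+2 <= FF k &
      forall y', FF k.+2 < y' <= FF k -> ~ PP y' (FF k)].
Proof.
move=> hk [l u].
set i := m - k.+2.
have ei : m - k = i.+2 by rewrite /i; lia.
rewrite ei in l u.
have pa : PP (Ex i) (Ex i.+2) by apply: LPa; rewrite /i; lia.
have pk : PP (Ex i) (FF k).
  by apply: (sub_mono (leqnn _) _ l pa); apply: LEmono; lia.
have hik : Ex i <= FF k by apply: leq_trans l; apply: LEmono; lia.
have [d1 d2 d3 d4] := @dsearchP (fun y => pb (PP y (FF k))) (FF k) (Ex i) hik (introT (pbP _) pk).
have e2 : dsearch (fun y => pb (PP y (FF k))) (FF k) = FF k.+2 by [].
rewrite e2 in d1 d2 d3 d4.
split => //; last 2 first.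
- by apply/pbP.
- by move=> y' hy' /pbP; apply/negP; apply: d4.
split; first by rewrite /i in d2 *.
move=> _; rewrite -/i ltnNge; apply/negP => c.
have P1 : PP (Ex i.+1) (FF k) by apply: (sub_mono c d3 (leqnn _)); apply/pbP.
have eim : m = i.+2 + k by rewrite /i; lia.
clearbody i.
case: k hk u l ei e2 d1 d2 d3 d4 pk hik P1 eim c => [|k] hk u l ei e2 d1 d2 d3 d4 pk hik P1 eim c.
  apply: (LPc (i := i.+1)); first by lia.
  have em : i.+2 = m by lia.
  by rewrite em LEm.
apply: (LPb (i := i.+1) (y := FF k.+1)) => //; first by lia.
  by apply: leq_trans c d3.
exact: u.
Qed.

Lemma Finv_aux k : (k <= m -> Inv k) /\ (k.+1 <= m -> Inv k.+1).
Proof.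
elim: k => [|k [IH1 IH2]].
  split=> [_|h1]; first by split; [rewrite subn0 LEm|].
  have h : Ex m.-1 < N.
    by have := @LElt m.-1; rewrite prednK // LEm; apply; lia.
  rewrite /Inv subn1 prednK // LEm /=; split => //; lia.
split => // h; have [] := Fstep h (IH1 (ltnW (ltnW h))) => //.
Qed.

Lemma Finv k : k <= m -> Inv k.
Proof. by case: (Finv_aux k). Qed.

Lemma Fdec j : j < m -> FF j.+1 < FF j.
Proof.
move=> hj; have [_ u] := Finv hj; have [l _] := Finv (ltnW hj).
have := u isT; rewrite (_ : (m - j.+1).+1 = m - j) //; first by move=> h; apply: leq_trans h l.
lia.
Qed.

Lemma Fle j : j <= m -> FF j <= N.
Proof.
elim: j => [|j IH] hj //; apply: ltnW; apply: leq_trans (Fdec hj) _.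
by apply: IH; apply: ltnW.
Qed.

Lemma Fm : FF m = 0.
Proof.
have [_ u] := Finv (leqnn m); have := u Hm; rewrite subnn LE1; lia.
Qed.

Definition vsL := mkseq (fun j => sub ws (FF j.+1) (FF j)) m.

Lemma tele k : k <= m -> flatten (rev (mkseq (fun j => sub ws (FF j.+1) (FF j)) k)) = sub ws (FF k) N.
Proof.
elim: k => [|k IH] hk; first by rewrite /sub subnn take0.
rewrite mkseqS rev_rcons /= IH; last by apply: ltnW.
rewrite -subcat //; apply/andP; split; first by apply: ltnW; apply: Fdec.
by apply: Fle; apply: ltnW.
Qed.

Lemma L2R_main : rdecw rels m ws vsL.
Proof.
split.
- by rewrite size_mkseq.
- by rewrite tele // Fm sub_full.
- move=> _; rewrite nth_mkseq // size_sub //=.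
  have := LElt (i := m.-1); rewrite prednK // LEm; lia.
- move=> i hi; rewrite nth_mkseq //.
  case: i hi => [|j] hj.
    move=> /= HP; apply: (LPc (i := m.-1)); first by lia.
    rewrite /PP prednK // LEm; apply: (sub_mono _ (leq_pred _) (leqnn _) HP).
    by have [l _] := @Finv 1 Hm; rewrite subn1 in l.
  move=> HP.
  have [l2 _] := Finv hj; have [_ u1] := Finv (ltnW hj).
  have u := u1 isT.
  set i' := m - j.+2.
  have ei : (m - j.+1).+1 = i'.+2 by rewrite /i'; lia.
  rewrite ei in u.
  apply: (LPb (i := i') (y := FF j.+1)) => //; first by rewrite /i'; lia.
    by apply: leq_trans l2 _; apply: ltnW; apply: Fdec.
  apply: (sub_mono l2 _ (leqnn _) HP); by apply: ltnW; apply: Fdec.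
- move=> i hi; rewrite !nth_mkseq //; last by apply: ltnW.
  have [_ Pst Hle Hmax] := Fstep hi (Finv (ltnW (ltnW hi))).
  have Hc : FF i.+2 <= FF i.+1 <= FF i.
    by apply/andP; split; apply: ltnW; apply: Fdec; lia.
  rewrite -subcat //; split => // x y Hxy Hx HP.
  have Hy := sub_splitr Hle Hxy.
  have Hs : size x + size y = FF i - FF i.+2.
    by rewrite -size_cat -Hxy size_sub // Fle // ltnW // ltnW.
  apply: (Hmax (FF i.+2 + size x)); last by rewrite /PP -Hy.
  apply/andP; split; last by lia.
  by case: x Hx {Hxy Hy Hs} => // a x _; rewrite /= addnS ltnS leq_addr.
Qed.

End L2R.

Lemma L2R (rels : seq E -> Prop) m ws us : ldecw rels m ws us -> exists vs, rdecw rels m ws vs.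
Proof.
case: m => [|m] H; first last.
  by eexists; apply: (L2R_main H).

exists [::]; case: H => Hs Hw _ _ _; move/size0nil: Hs => Hs; subst.
by split => // i; rewrite ltn0.
Qed.


Section Mirror.
Variables (rels rels' : seq E -> Prop).
Hypothesis Hr : forall r, rels' r <-> rels (rev r).

Lemma inI_rev w : inIw rels' w <-> inIw rels (rev w).
Proof.
split.
- case=> l [r [m' [h ->]]]; exists (rev m'), (rev r), (rev l); split; first by apply/Hr.
  by rewrite !rev_cat catA.
- case=> l [r [m' [h Hw]]]; exists (rev m'), (rev r), (rev l); split.
    by apply/Hr; rewrite revK.
  by rewrite -(revK w) Hw !rev_cat catA.
Qed.

Lemma nth_rev_map (vs : seq (seq E)) i : nth [::] (map rev vs) i = rev (nth [::] vs i).
Proof.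
case: (ltnP i (size vs)) => h; first by rewrite (nth_map [::]).
by rewrite !nth_default ?size_map.
Qed.

Lemma mirA m ws vs : rdecw rels m ws vs -> ldecw rels' m (rev ws) (map rev vs).
Proof.
case=> Hs Hw H0 Hn Hp; split.
- by rewrite size_map.
- by rewrite Hw rev_flatten map_rev revK.
- by move=> h; rewrite nth_rev_map size_rev; exact: H0.
- by move=> i hi; rewrite nth_rev_map => /inI_rev; rewrite revK; exact: Hn.
- move=> i hi; have [h1 h2] := Hp i hi; rewrite !nth_rev_map; split.
    by apply/inI_rev; rewrite rev_cat !revK.
  move=> x y Hxy Hy /inI_rev Hx; apply: (h2 (rev y) (rev x)) => //.
    by rewrite -rev_cat -Hxy rev_cat !revK.
  by move=> e; apply: Hy; rewrite -(revK y) e.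
Qed.

Lemma mirB m ws us : ldecw rels m ws us -> rdecw rels' m (rev ws) (map rev us).
Proof.
case=> Hs Hw H0 Hn Hp; split.
- by rewrite size_map.
- by rewrite Hw rev_flatten.
- by move=> h; rewrite nth_rev_map size_rev; exact: H0.
- by move=> i hi; rewrite nth_rev_map => /inI_rev; rewrite revK; exact: Hn.
- move=> i hi; have [h1 h2] := Hp i hi; rewrite !nth_rev_map; split.
    by apply/inI_rev; rewrite rev_cat !revK.
  move=> x y Hxy Hx /inI_rev Hy; apply: (h2 (rev y) (rev x)) => //.
    by rewrite -rev_cat -Hxy rev_cat !revK.
  by move=> e; apply: Hx; rewrite -(revK x) e.
Qed.

End Mirror.

Lemma R2L (rels : seq E -> Prop) m ws vs : rdecw rels m ws vs -> exists us, ldecw rels m ws us.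
Proof.
move=> H.
have Hr : forall r, (fun r => rels (rev r)) r <-> rels (rev r) by [].
have H1 := mirA Hr H.
have [vs' H2] := L2R H1.
have Hr2 : forall r, rels r <-> (fun r => rels (rev r)) (rev r) by move=> r; rewrite revK.
have := mirA Hr2 H2; rewrite revK => H3.
by exists (map rev vs').
Qed.


Lemma Ext (rels : seq E -> Prop) m q1 q2 a b us1 us2 :
  ~~ odd m -> ldecw rels m q1 us1 -> ldecw rels m q2 us2 -> q1 ++ a = b ++ q2 ->
  0 < size a -> 0 < size b -> ~ inIw rels a ->
  exists u c, a = u ++ c /\ ldecw rels m.+1 (q1 ++ u) (rcons us1 u).
Proof.
move=> Hev H1 H2 Hq Ha Hb HaI.
case: m Hev H1 H2 => [|m] Hev H1 H2.
  case: H1 => Hs1 Hw1 _ _ _; move/size0nil: Hs1 => Hs1; subst.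
  case: a Ha Hq HaI => // x a' _ Hq HaI.
  exists [:: x], a'; split => //; split => //.
  move=> i; rewrite ltnS leqn0 => /eqP -> /= HI; apply: HaI.
  by have := inI_ext [::] a' HI.
set M := m.+1.
have HM : 0 < M by [].
have E2w : b ++ q2 ++ [::] = [::] ++ q1 ++ a by rewrite cats0 Hq.
have Sw : size (q1 ++ a) = size b + size q2 by rewrite Hq size_cat.
have C : forall k, (2 * k).+1 < M -> Ep us1 [::] (2 * k).+1 <= Ep us2 b (2 * k).
  elim=> [|k IH] hk.
    by rewrite (Ep1 [::] H1) // Ep0; case: (size b) Hb.
  have IH' : Ep us1 [::] (2 * k).+1 <= Ep us2 b (2 * k) by apply: IH; lia.
  have e1 : (2 * k.+1).+1 = (2 * k).+3 by rewrite mulnS; lia.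
  have e2 : (2 * k.+1) = (2 * k).+2 by rewrite mulnS; lia.
  rewrite e1 e2; rewrite e1 in hk.
  rewrite leqNgt; apply/negP => c.
  have pa2 := @Pa rels M q2 us2 b [::] H2 (2 * k) (ltn_trans (ltnSn _) (ltn_trans (ltnSn _) hk)).
  rewrite E2w in pa2.
  apply: (@Pb rels M q1 us1 [::] a H1 (2 * k).+1 (Ep us2 b (2 * k).+2)) => //.
  - by apply: ltn_trans hk.
  - by apply: leq_trans IH' _; apply: Ep_mono; lia.
  - by apply: (sub_mono IH' _ (leqnn _) pa2); apply: Ep_mono; lia.
have Hm1 : odd m by move: Hev => /=; rewrite negbK.
set k := m./2.
have ek : m = (2 * k).+1 by rewrite /k -[in LHS](odd_double_half m) Hm1 -mul2n add1n.
have Ck := C k (ltac:(by rewrite /M ek ltnSn)).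
have pa2 := @Pa rels M q2 us2 b [::] H2 (2 * k) (ltac:(by rewrite /M ek ltnSn)).
rewrite E2w in pa2.
have e2m : Ep us2 b (2 * k).+2 = size (q1 ++ a) by rewrite (_ : (2*k).+2 = M) ?(Epm b H2) // /M ek.
rewrite e2m in pa2.
have h2 : Ep us2 b (2 * k) <= size (q1 ++ a) by rewrite -e2m; apply: Ep_mono; lia.
have Hex := sub_mono Ck h2 (leqnn _) pa2.
move: Hex; rewrite (_ : (2 * k).+1 = m) // => Hex.
have E1M : Ep us1 [::] M = size q1 by rewrite (Epm [::] H1).
pose Pz z := (Ep us1 [::] M <= z) && pb (inIw rels (sub (q1 ++ a) (Ep us1 [::] m) z)).
have exz : exists z, Pz z.
  exists (size (q1 ++ a)); apply/andP; split; last by apply/pbP.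
  by rewrite E1M size_cat leq_addr.
case: (ex_minnP exz) => z /andP [hz1 /pbP hz2] hmin.
have hzw : z <= size (q1 ++ a).
  apply: hmin; apply/andP; split; last by apply/pbP.
  by rewrite E1M size_cat leq_addr.
set u := sub (q1 ++ a) (Ep us1 [::] M) z.
have ua : a = u ++ drop (z - size q1) a.
  by rewrite /u /sub E1M drop_size_cat // cat_take_drop.
have uI : ~ inIw rels u.
  by move=> HI; apply: HaI; rewrite ua; have := inI_ext [::] (drop (z - size q1) a) HI.
exists u, (drop (z - size q1) a); split => //.
have H1c := H1.
case: H1 => Hs1 Hw1 H01 Hn1 Hp1.
split.
- by rewrite size_rcons Hs1.
- by rewrite flatten_rcons Hw1.
- by move=> _; rewrite nth_rcons Hs1 /= H01.
- move=> i; rewrite ltnS nth_rcons Hs1 leq_eqVlt => /orP [/eqP ->|hi].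
    by rewrite ltnn eqxx.
  by rewrite hi; apply: Hn1.
- move=> i; rewrite ltnS => hi; rewrite !nth_rcons Hs1 hi.
  case: (ltnP i.+1 M) => h.
    by apply: Hp1.
  have ei' : i = m by move: h hi; rewrite /M; lia.
  subst i; rewrite eqxx.
  rewrite (Ep_nth [::] a H1c (ltnSn m)) /=.
  rewrite /u -subcat; last by rewrite hz1 Ep_mono.
  split => // x y Hxy Hy Hx.
  have Hsx := sub_splitl Hxy.
  have Hs : size x + size y = z - Ep us1 [::] m.
    by rewrite -size_cat -Hxy size_sub.
  have Hy0 : 0 < size y by case: y Hy {Hxy Hs} => // ? ? _.
  case: (leqP (Ep us1 [::] M) (Ep us1 [::] m + size x)) => hc.
    have hz : z <= Ep us1 [::] m + size x.
      by apply: hmin; apply/andP; split => //; apply/pbP; rewrite -Hsx.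
    have := Ep_mono us1 [::] (leqnSn m); move: Hs Hy0 hz hz1; rewrite /M; lia.
  apply: (@Pc rels M q1 us1 [::] a H1c m (ltnSn m)) => /=.
  by apply: (sub_mono (leqnn _) (leq_addr _ _) (ltnW hc)); rewrite -Hsx.
Qed.

End Words.

Lemma arith (n : int) : (-1 <= n)%R -> odd `|n|%N ->
  exists m, [/\ `|(n + 1)%R|%N = m, `|(n + 1 + 1)%R|%N = m.+1, ~~ odd m,
    (-1 <= n + 1)%R & (n <= n + 1)%R].
Proof.
case: n => k Hn Ho.
  exists k.+1; rewrite -!PoszD !addn1 /=; split => //; lia.
have k0 : k = 0%N by move: Hn; rewrite NegzE; lia.
subst k; exists 0%N; split => //.
Qed.

Section Glue.
Variables (V E : finType) (s t : E -> V) (rels : seq E -> Prop).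

Lemma ldec_iff m p us : ldec s t rels m p us <-> valid s t p /\ ldecw rels m (parrs p) us.
Proof.
rewrite /ldec /ldecw; split.
  by case=> [[Hv Hs] Hw H0 Hn Hp]; split => //; split.
by case=> Hv [Hs Hw H0 Hn Hp]; split.
Qed.

Lemma rdec_iff m p vs : rdec s t rels m p vs <-> valid s t p /\ rdecw rels m (parrs p) vs.
Proof.
rewrite /rdec /rdecw; split.
  by case=> [[Hv Hs] Hw H0 Hn Hp]; split => //; split.
by case=> Hv [Hs Hw H0 Hn Hp]; split.
Qed.

Lemma chain_cat h r h2 r2 : chain s t (h :: r ++ h2 :: r2) <->
  chain s t (h :: r) /\ s (last h r) = t h2 /\ chain s t (h2 :: r2).
Proof.
elim: r h => [|h' r IH] h /=.
  by split; [case=> a b | case=> _ [a b]].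
split.
  by case=> e /IH [c1 [c2 c3]]; do !split.
by case=> [[e c1] [c2 c3]]; split => //; apply/IH; do !split.
Qed.

Lemma valid_cat x y w1 w2 : valid s t (QPath x y (w1 ++ w2)) <->
  exists z, valid s t (QPath z y w1) /\ valid s t (QPath x z w2).
Proof.
case: w1 => [|h r] /=.
  by split; [move=> Hv; exists y | case=> z []; rewrite /valid /= => -> Hv].
case: w2 => [|h2 r2].
  rewrite cats0 /=; split; first by move=> Hv; exists x.
  by case=> z []; rewrite /valid /= => Hv ->.
rewrite /valid /=; split.
  case=> e1 [e2 /chain_cat [c1 [c2 c3]]]; exists (t h2); split => //.
  by split => //; split => //; rewrite e2 last_cat.
case=> z [[e1 [e2 c1]] [e3 [e4 c4]]]; split => //; split.
  by rewrite last_cat /= e4.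
by apply/chain_cat; do !split => //; rewrite -e2.
Qed.

End Glue.

Theorem mainTheorem3
  (V E : finType) (s t : E -> V) (rels : seq E -> Prop)
  (* I is generated by paths of length >= 2 *)
  (Hrels : forall r, rels r -> (2 <= size r)%N /\ chain s t r)
  (* A = kQ/I is finite dimensional: long enough paths lie in I *)
  (Hfin : exists N : nat, forall p : qpath V E,
            valid s t p -> (N <= size (parrs p))%N -> inI rels p)
  (n : int) (Hn : (-1 <= n)%R) (Hodd : odd `|n|%N)
  (q1 q2 a b : qpath V E)
  (Hq1 : Gamma s t rels n q1) (Hq2 : Gamma s t rels n q2)
  (Ha : valid s t a) (Hb : valid s t b)
  (Ha0 : (0 < size (parrs a))%N) (Hb0 : (0 < size (parrs b))%N)
  (Hq1a : psrc q1 = ptgt a) (Hbq2 : psrc b = ptgt q2)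
  (Hw : pcat q1 a = pcat b q2)
  (HaI : ~ inI rels a) (HbI : ~ inI rels b) :
  exists p1 p2 : qpath V E,
    (* p1 in Gamma_{n+1}, occurring in w = q1 a as a suffix (w = p1 c), so that the
       occurrence of sigma_n(p1) in w is the occurrence q1; and sigma_n(p1) = q1 *)
    (Gamma s t rels (n + 1)%R p1 /\
     (exists c, composable s t p1 c /\ pcat q1 a = pcat p1 c) /\
     sigma_is s t rels (n + 1)%R n p1 q1) /\
    (* p2 in Gamma_{n+1}, occurring in w as a prefix (w = c p2); pi_n(p2) = q2 *)
    (Gamma s t rels (n + 1)%R p2 /\
     (exists c, composable s t c p2 /\ pcat q1 a = pcat c p2) /\
     pi_is s t rels (n + 1)%R n p2 q2).
Proof.
have [m [Em1 Em2 Hev Hn1 Hnn]] := arith Hn Hodd.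
case: Hq1 => _ [us1 /ldec_iff [Vq1 L1]].
case: Hq2 => _ [us2 /ldec_iff [Vq2 L2]].
rewrite Em1 in L1 L2.
case: q1 Hw Hq1a Vq1 L1 => x1 y1 w1.
case: q2 Hbq2 Vq2 L2 => x2 y2 w2.
case: a Ha Ha0 HaI => xa ya wa.
case: b Hb Hb0 HbI => xb yb wb.
rewrite /pcat /= => Vb Hb0 HbI Va Ha0 HaI Hbq2 Vq2 L2 Hw Hq1a Vq1 L1.
case: Hw => Hsrc Htgt Hwd.
subst ya x2 y1 xb.
have Vw : valid s t (QPath xa yb (w1 ++ wa)) by apply/valid_cat; exists x1.
have [u [c [Hac L1']]] := Ext Hev L1 L2 Hwd Ha0 Hb0 HaI.
have [z1 [Vp1 Vc1]] : exists z, valid s t (QPath z yb (w1 ++ u)) /\ valid s t (QPath xa z c).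
  by apply/valid_cat; rewrite -catA -Hac.
have [vs1 R1] := L2R L1.
have [vs2 R2] := L2R L2.
have Hr : forall r, (fun r => rels (rev r)) r <-> rels (rev r) by [].
have M1 := mirA Hr R1.
have M2 := mirA Hr R2.
have Hwd' : rev w2 ++ rev wb = rev wa ++ rev w1 by rewrite -!rev_cat Hwd.
have HbI' : ~ inIw (fun r => rels (rev r)) (rev wb).
  by move/(inI_rev Hr); rewrite revK.
have [u2 [c2 [Hbc L2']]] := Ext Hev M2 M1 Hwd' (ltac:(by rewrite size_rev)) (ltac:(by rewrite size_rev)) HbI'.
have Hr2 : forall r, rels r <-> (fun r => rels (rev r)) (rev r) by move=> r; rewrite revK.
have R2' := mirB Hr2 L2'.
rewrite rev_cat revK map_rcons (mapK revK) in R2'.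
have [us' L2''] := R2L R2'.
have Hwb : wb = rev c2 ++ rev u2 by rewrite -rev_cat -Hbc revK.
have [z2 [Vc2 Vp2]] : exists z, valid s t (QPath z yb (rev c2)) /\ valid s t (QPath xa z (rev u2 ++ w2)).
  by apply/valid_cat; rewrite catA -Hwb -Hwd.
exists (QPath z1 yb (w1 ++ u)), (QPath xa z2 (rev u2 ++ w2)); split; split.
- split => //; exists (rcons us1 u); rewrite Em2; apply/ldec_iff; split => //.
- split.
    exists (QPath xa z1 c); split; first by split.
    by rewrite /pcat /= -catA -Hac.
  split => //; split => //; exists (rcons us1 u); split => //.
  + by rewrite Em2; apply/ldec_iff.
  + rewrite Em1 -cats1 take_size_cat; first by case: L1.
    by case: L1.
- split => //; exists us'; rewrite Em2; apply/ldec_iff; split => //.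
- split.
    exists (QPath z2 yb (rev c2)); split; first by split.
    by rewrite /pcat /= catA -Hwb Hwd.
  split => //; split => //; exists (rcons vs2 (rev u2)); split => //.
  + by rewrite Em2; apply/rdec_iff.
  + rewrite Em1 -cats1 take_size_cat; first by case: R2.
    by case: R2.
Qed.
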